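(* Consider the iterates $\{x(t)\}$ of the asynchronous network Newton method described in the context, with arbitrary $x(0)\in\mathbb{R}^n$, in a network with $n\ge 2$ agents. If $$0<\varepsilon<\min\left\{1,\;2\left(\frac{\lambda}{\Lambda}\right)^2\right\},$$ then for all $t\ge0$ $$\mathbb{E}\big[F(x(t))-F^*\big]\le(1-\beta)^t\big(F(x(0))-F^*\big),\qquad \beta=\frac{\alpha m\,\varepsilon\,(2\lambda^2-\varepsilon\Lambda^2)}{n\lambda},$$ and $0<\beta<1$.
   Context: Setup. Let $n\ge 1$ be the number of agents and $\alpha>0$ a scalar. $W\in\mathbb{R}^{n\times n}$ is a symmetric nonnegative matrix with $W\mathbb{1}=\mathbb{1}$ (where $\mathbb{1}$ is the all-ones vector), $\mathrm{null}(I-W)=\mathrm{span}\{\mathbb{1}\}$, $0\le W_{ij}<1$ for all $i,j$, and $\delta\le W_{ii}\le\Delta$ for all $i$, for constants $0<\delta\le\Delta<1$. Each $f_i:\mathbb{R}\to\mathbb{R}$ is twice continuously differentiable with $0<m\le f_i''(s)\le M<\infty$ for all $s$ and $|f_i''(a)-f_i''(b)|\le L|a-b|$ for all $a,b$. Define $F(x)=\frac12 x^T(I-W)x+\alpha\sum_{i=1}^n f_i(x_i)$ for $x\in\mathbb{R}^n$, with minimum value $F^*$ and minimizer $x^*$. Let $g(x)=\nabla F(x)$, $G(x)=\mathrm{diag}(f_1''(x_1),\dots,f_n''(x_n))$, $H(x)=\nabla^2F(x)=I-W+\alpha G(x)$. Let $W_d$ be the diagonal matrix with $[W_d]_{ii}=W_{ii}$,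 and set $D(x)=\alpha G(x)+2(I-W_d)$ (diagonal, positive definite) and $B=I-2W_d+W$, so $H(x)=D(x)-B$. Define the approximate Hessian inverse $\hat H(x)^{-1}=D(x)^{-1/2}\big(I+D(x)^{-1/2}BD(x)^{-1/2}\big)D(x)^{-1/2}$. Constants: $\rho=\frac{2(1-\delta)}{2(1-\delta)+\alpha m}$, $\Lambda=\frac{1+\rho}{2(1-\Delta)+\alpha m}$, $\lambda=\frac{1}{2(1-\delta)+\alpha M}$. Algorithm (asynchronous network Newton). Given $x(0)\in\mathbb{R}^n$ and stepsize $\varepsilon>0$, let $\Phi(1),\Phi(2),\dots$ be i.i.d. random diagonal $n\times n$ matrices, each equal to $e_ie_i^T$ (the matrix with a single $1$ in position $(i,i)$ and zeros elsewhere) with probability $1/n$ for each $i=1,\dots,n$ (i.e., one uniformly random agent is active per iteration). The iterates are $x(t)=x(t-1)-\varepsilon\,\Phi(t)\hat H(x(t-1))^{-1}g(x(t-1))$, $t\ge1$. Write $g(t)=g(x(t))$, $D(t)=D(x(t))$, $H(t)=H(x(t))$, $\hat H(t)^{-1}=\hat H(x(t))^{-1}$. $\mathcal{F}_t$ denotes the $\sigma$-field generated by $\Phi(1),\dots,\Phi(t)$ (so $x(t)$ is $\mathcal{F}_t$-measurable). *)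

(* Defs.v *)
From Stdlib Require Import Reals Lra List.
Import ListNotations.
Open Scope R_scope.

(* Vectors in R^n are functions nat -> R (only indices < n matter);
   n x n matrices are functions nat -> nat -> R. *)

Fixpoint rsum (n : nat) (f : nat -> R) : R :=
  match n with
  | O => 0
  | S k => rsum k f + f k
  end.

Definition kron (i j : nat) : R := if Nat.eqb i j then 1 else 0.

Definition Fobj (n : nat) (W : nat -> nat -> R) (alpha : R)
  (f : nat -> R -> R) (x : nat -> R) : R :=
  / 2 * rsum n (fun i => x i * rsum n (fun j => (kron i j - W i j) * x j))
  + alpha * rsum n (fun i => f i (x i)).

(* g(x) = grad F(x) = (I - W) x + alpha (f_i'(x_i))_i, with f1 i = f_i' *)
Definition grad (n : nat) (W : nat -> nat -> R) (alpha : R)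
  (f1 : nat -> R -> R) (x : nat -> R) : nat -> R :=
  fun i => rsum n (fun j => (kron i j - W i j) * x j) + alpha * f1 i (x i).

(* D(x) = alpha G(x) + 2 (I - W_d), diagonal entries; f2 i = f_i'' *)
Definition Ddiag (W : nat -> nat -> R) (alpha : R) (f2 : nat -> R -> R)
  (x : nat -> R) : nat -> R :=
  fun i => alpha * f2 i (x i) + 2 * (1 - W i i).

Definition Bmat (W : nat -> nat -> R) : nat -> nat -> R :=
  fun i j => kron i j * (1 - 2 * W i i) + W i j.

(* Hhat(x)^{-1} v = D^{-1/2} (I + D^{-1/2} B D^{-1/2}) D^{-1/2} v *)
Definition Hhat_inv_apply (n : nat) (W : nat -> nat -> R) (alpha : R)
  (f2 : nat -> R -> R) (x v : nat -> R) : nat -> R :=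
  let s := fun i => / sqrt (Ddiag W alpha f2 x i) in
  let y := fun i => s i * v i in
  let z := fun i => y i + s i * rsum n (fun j => Bmat W i j * (s j * y j)) in
  fun i => s i * z i.

(* One iteration with Phi = e_k e_k^T (agent k active):
   x <- x - eps * Phi * Hhat(x)^{-1} g(x) *)
Definition ann_step (n : nat) (W : nat -> nat -> R) (alpha : R)
  (f1 f2 : nat -> R -> R) (eps : R) (x : nat -> R) (k : nat) : nat -> R :=
  fun j => if Nat.eqb j k
           then x j - eps * Hhat_inv_apply n W alpha f2 x (grad n W alpha f1 x) j
           else x j.

(* x(t) for a given realization (list of active agents Phi(1), ..., Phi(t)) *)
Definition ann_run (n : nat) (W : nat -> nat -> R) (alpha : R)
  (f1 f2 : nat -> R -> R) (eps : R) (x0 : nat -> R) (s : list nat) : nat -> R :=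
  fold_left (ann_step n W alpha f1 f2 eps) s x0.

Fixpoint all_seqs (n t : nat) : list (list nat) :=
  match t with
  | O => [ [] ]
  | S t' => flat_map (fun k => map (cons k) (all_seqs n t')) (seq 0 n)
  end.

(* E[F(x(t))]: the Phi(1..t) are i.i.d. uniform on {e_i e_i^T}, so the law of
   (Phi(1),...,Phi(t)) is uniform on the n^t sequences. *)
Definition expected_F (n : nat) (W : nat -> nat -> R) (alpha : R)
  (f f1 f2 : nat -> R -> R) (eps : R) (x0 : nat -> R) (t : nat) : R :=
  / (INR n ^ t) *
  fold_right Rplus 0
    (map (fun s => Fobj n W alpha f (ann_run n W alpha f1 f2 eps x0 s))
         (all_seqs n t)).

Definition rho_c (delta alpha m : R) : R :=
  2 * (1 - delta) / (2 * (1 - delta) + alpha * m).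
Definition Lambda_c (delta Delta alpha m : R) : R :=
  (1 + rho_c delta alpha m) / (2 * (1 - Delta) + alpha * m).
Definition lambda_c (delta alpha M : R) : R :=
  1 / (2 * (1 - delta) + alpha * M).

(* Main.v *)
Require Import Defs.
From Stdlib Require Import Reals Lra List Lia FunctionalExtensionality.
Import ListNotations.
Open Scope R_scope.

Lemma rsum_ext n f g : (forall i, (i < n)%nat -> f i = g i) -> rsum n f = rsum n g.
Proof. induction n; simpl; intros H; auto. rewrite IHn by (intros; apply H; lia). rewrite H by lia. auto. Qed.

Lemma rsum_le n f g : (forall i, (i < n)%nat -> f i <= g i) -> rsum n f <= rsum n g.
Proof. induction n; simpl; intros H; [lra|]. pose proof (IHn ltac:(intros; apply H; lia)). pose proof (H n ltac:(lia)). lra. Qed.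

Lemma rsum_plus n f g : rsum n (fun i => f i + g i) = rsum n f + rsum n g.
Proof. induction n; simpl; [lra|]. rewrite IHn; lra. Qed.

Lemma rsum_minus n f g : rsum n (fun i => f i - g i) = rsum n f - rsum n g.
Proof. induction n; simpl; [lra|]. rewrite IHn; lra. Qed.

Lemma rsum_scal n c f : rsum n (fun i => c * f i) = c * rsum n f.
Proof. induction n; simpl; [lra|]. rewrite IHn; lra. Qed.

Lemma rsum_const n c : rsum n (fun _ => c) = INR n * c.
Proof. induction n; simpl rsum; [simpl; lra|]. rewrite IHn, S_INR; lra. Qed.

Lemma rsum_swap n m F : rsum n (fun i => rsum m (fun j => F i j)) = rsum m (fun j => rsum n (fun i => F i j)).
Proof. induction n; simpl. { induction m; simpl; lra. } rewrite IHn, <- rsum_plus. reflexivity. Qed.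

Lemma kron_sym i j : kron i j = kron j i.
Proof. unfold kron. rewrite Nat.eqb_sym. reflexivity. Qed.

Lemma kron_eq i : kron i i = 1.
Proof. unfold kron. rewrite Nat.eqb_refl. reflexivity. Qed.

Lemma kron_neq i j : i <> j -> kron i j = 0.
Proof. intros H. unfold kron. destruct (Nat.eqb_spec i j); [contradiction|reflexivity]. Qed.

Lemma rsum_kron_out n k c : (n <= k)%nat -> rsum n (fun i => kron i k * c i) = 0.
Proof. induction n; simpl; intros H; [lra|]. rewrite IHn by lia. rewrite kron_neq by lia. lra. Qed.

Lemma rsum_kron n k c : (k < n)%nat -> rsum n (fun i => kron i k * c i) = c k.
Proof.
  induction n; simpl; intros H; [lia|].
  destruct (Nat.eq_dec k n) as [->|E].
  - rewrite rsum_kron_out by lia. rewrite kron_eq. lra.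
  - rewrite IHn by lia. rewrite kron_neq by lia. lra.
Qed.

Lemma rsum_kron' n k c : (k < n)%nat -> rsum n (fun i => kron k i * c i) = c k.
Proof. intros H. rewrite <- (rsum_kron n k c H). apply rsum_ext. intros; rewrite kron_sym; auto. Qed.

Definition Qf (n : nat) (A : nat -> nat -> R) (v : nat -> R) : R :=
  rsum n (fun i => v i * rsum n (fun j => A i j * v j)).

Lemma rsum_inner n a F : rsum n (fun i => a i * rsum n (fun j => F i j)) = rsum n (fun i => rsum n (fun j => a i * F i j)).
Proof. apply rsum_ext; intros. rewrite rsum_scal. auto. Qed.

Lemma bil_sym n A a b : (forall i j, (i < n)%nat -> (j < n)%nat -> A i j = A j i) ->
  rsum n (fun i => a i * rsum n (fun j => A i j * b j)) = rsum n (fun i => b i * rsum n (fun j => A i j * a j)).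
Proof.
  intros S. rewrite !rsum_inner, rsum_swap. apply rsum_ext; intros j Hj. apply rsum_ext; intros i Hi.
  rewrite (S i j) by auto. ring.
Qed.

Lemma quad_expand n A x d : (forall i j, (i < n)%nat -> (j < n)%nat -> A i j = A j i) ->
  Qf n A (fun i => x i + d i) = Qf n A x + 2 * rsum n (fun i => d i * rsum n (fun j => A i j * x j)) + Qf n A d.
Proof.
  intros S. unfold Qf.
  assert (E : rsum n (fun i => (x i + d i) * rsum n (fun j => A i j * (x j + d j))) =
     rsum n (fun i => x i * rsum n (fun j => A i j * x j)) + rsum n (fun i => x i * rsum n (fun j => A i j * d j))
     + rsum n (fun i => d i * rsum n (fun j => A i j * x j)) + rsum n (fun i => d i * rsum n (fun j => A i j * d j))).
  { rewrite <- !rsum_plus. apply rsum_ext; intros i Hi.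
    replace (rsum n (fun j => A i j * (x j + d j))) with (rsum n (fun j => A i j * x j) + rsum n (fun j => A i j * d j)).
    ring. rewrite <- rsum_plus. apply rsum_ext; intros; ring. }
  rewrite E. rewrite (bil_sym n A x d S). ring.
Qed.

Lemma W_colsum n W v : (forall i j, (i < n)%nat -> (j < n)%nat -> W i j = W j i) ->
  (forall i, (i < n)%nat -> rsum n (fun j => W i j) = 1) ->
  rsum n (fun i => rsum n (fun j => W i j * v j)) = rsum n v.
Proof.
  intros S Rw. rewrite rsum_swap. apply rsum_ext; intros j Hj.
  transitivity (v j * rsum n (fun i => W j i)). rewrite <- rsum_scal. apply rsum_ext; intros. rewrite S by auto. ring.
  rewrite Rw by auto. ring.
Qed.

Lemma W_rowsum n W v :
  (forall i, (i < n)%nat -> rsum n (fun j => W i j) = 1) ->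
  rsum n (fun i => rsum n (fun j => W i j * v i)) = rsum n v.
Proof.
  intros Rw. apply rsum_ext; intros i Hi.
  transitivity (v i * rsum n (fun j => W i j)). rewrite <- rsum_scal. apply rsum_ext; intros. ring.
  rewrite Rw by auto. ring.
Qed.

Lemma W_avg_zero n W v : (forall i j, (i < n)%nat -> (j < n)%nat -> W i j = W j i) ->
  (forall i, (i < n)%nat -> rsum n (fun j => W i j) = 1) ->
  rsum n (fun i => rsum n (fun j => kron i j * v i ^ 2 - (W i j * v i ^ 2 + W i j * v j ^ 2) / 2)) = 0.
Proof.
  intros S Rw.
  assert (E: forall i, (i < n)%nat -> rsum n (fun j => kron i j * v i ^ 2 - (W i j * v i ^ 2 + W i j * v j ^ 2) / 2)
     = v i ^ 2 - / 2 * rsum n (fun j => W i j * (v i ^ 2)) - / 2 * rsum n (fun j => W i j * (v j ^ 2))).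
  { intros i Hi. rewrite <- !rsum_scal.
    pose proof (rsum_kron' n i (fun _ => v i ^ 2) Hi) as K. simpl in K.
    rewrite <- K at 1. rewrite <- !rsum_minus. apply rsum_ext; intros; field. }
  rewrite (rsum_ext _ _ _ E). rewrite !rsum_minus, !rsum_scal.
  rewrite (W_rowsum n W (fun i => v i ^ 2) Rw), (W_colsum n W (fun j => v j ^ 2) S Rw). lra.
Qed.

Definition Cmat (W : nat -> nat -> R) := fun i j => kron i j - W i j.

Lemma C_psd n W v : (forall i j, (i < n)%nat -> (j < n)%nat -> W i j = W j i) ->
  (forall i j, (i < n)%nat -> (j < n)%nat -> 0 <= W i j < 1) ->
  (forall i, (i < n)%nat -> rsum n (fun j => W i j) = 1) ->
  0 <= Qf n (Cmat W) v.
Proof.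
  intros S P Rw. unfold Qf. rewrite rsum_inner. rewrite <- (W_avg_zero n W v S Rw).
  apply rsum_le; intros i Hi; apply rsum_le; intros j Hj. unfold Cmat.
  destruct (Nat.eq_dec i j) as [<-|E].
  - rewrite kron_eq. lra.
  - rewrite kron_neq by auto. pose proof (P i j Hi Hj). pose proof (Rmult_le_pos (W i j) ((v i - v j)^2) ltac:(lra) ltac:(apply pow2_ge_0)). nra.
Qed.

Lemma B_bounds n W u : (forall i j, (i < n)%nat -> (j < n)%nat -> W i j = W j i) ->
  (forall i j, (i < n)%nat -> (j < n)%nat -> 0 <= W i j < 1) ->
  (forall i, (i < n)%nat -> rsum n (fun j => W i j) = 1) ->
  0 <= Qf n (Bmat W) u <= rsum n (fun i => 2 * (1 - W i i) * u i ^ 2).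
Proof.
  intros S P Rw. unfold Qf. rewrite rsum_inner. split.
  - rewrite <- (W_avg_zero n W u S Rw).
    apply rsum_le; intros i Hi; apply rsum_le; intros j Hj. unfold Bmat.
    destruct (Nat.eq_dec i j) as [<-|E].
    + rewrite kron_eq. lra.
    + rewrite kron_neq by auto. pose proof (P i j Hi Hj). pose proof (Rmult_le_pos (W i j) ((u i + u j)^2) ltac:(lra) ltac:(apply pow2_ge_0)). nra.
  - apply Rle_trans with (rsum n (fun i => rsum n (fun j => kron i j * ((1 - 2 * W i i) * u i ^ 2) + (W i j * u i ^ 2 + W i j * u j ^ 2) / 2))).
    + apply rsum_le; intros i Hi; apply rsum_le; intros j Hj. unfold Bmat.
      destruct (Nat.eq_dec i j) as [<-|E].
      * rewrite kron_eq. lra.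
      * rewrite kron_neq by auto. pose proof (P i j Hi Hj). pose proof (Rmult_le_pos (W i j) ((u i - u j)^2) ltac:(lra) ltac:(apply pow2_ge_0)). nra.
    + apply Req_le.
      transitivity (rsum n (fun i => (1 - 2 * W i i) * u i ^ 2) + / 2 * rsum n (fun i => rsum n (fun j => W i j * u i ^ 2))
          + / 2 * rsum n (fun i => rsum n (fun j => W i j * u j ^ 2))).
      * rewrite <- !rsum_scal, <- !rsum_plus. apply rsum_ext; intros i Hi.
        pose proof (rsum_kron' n i (fun _ => (1 - 2 * W i i) * u i ^ 2) Hi) as K. simpl in K.
        rewrite <- K at 1. rewrite <- !rsum_scal, <- !rsum_plus. apply rsum_ext; intros; field.
      * rewrite (W_rowsum n W (fun i => u i ^ 2) Rw), (W_colsum n W (fun j => u j ^ 2) S Rw).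
        rewrite <- !rsum_scal, <- !rsum_plus. apply rsum_ext; intros; field.
Qed.

Lemma dpl_ext (f g : R -> R) x l l' :
  (forall y, f y = g y) -> l = l' -> derivable_pt_lim f x l -> derivable_pt_lim g x l'.
Proof.
  intros H Hl D. subst l'. intros e He. destruct (D e He) as [d Hd].
  exists d. intros h Hh Hd'. rewrite <- !H. apply Hd; auto.
Qed.

Lemma mono_int h h' a b : a <= b ->
  (forall c, a <= c <= b -> derivable_pt_lim h c (h' c)) ->
  (forall c, a <= c <= b -> 0 <= h' c) -> h a <= h b.
Proof.
  intros Hab D P. destruct (Req_dec a b) as [E|E]. { subst; lra. }
  destruct (MVT_cor2 h h' a b ltac:(lra) D) as [c [Hc1 Hc2]].
  assert (0 <= h' c) by (apply P; lra). nra.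
Qed.

Lemma taylor_lower (f f1 f2 : R -> R) c :
  (forall s, derivable_pt_lim f s (f1 s)) ->
  (forall s, derivable_pt_lim f1 s (f2 s)) ->
  (forall s, c <= f2 s) ->
  forall a b, c / 2 * (b - a) ^ 2 <= f b - f a - f1 a * (b - a).
Proof.
  intros Df Df1 Hc a b.
  assert (Dpsi : forall s, derivable_pt_lim (fun x => f1 x - c * x) s (f2 s - c)).
  { intros s. eapply dpl_ext; [| | apply (derivable_pt_lim_minus f1 (mult_real_fct c id)); [apply Df1| apply derivable_pt_lim_scal; apply derivable_pt_lim_id]].
    - intros y. reflexivity.
    - ring. }
  assert (Mpsi : forall u v, u <= v -> f1 u - c * u <= f1 v - c * v).
  { intros u v Huv. apply (mono_int (fun x => f1 x - c * x) (fun s => f2 s - c)); auto.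
    intros; specialize (Hc c0); lra. }
  set (phi := fun x => f x - f a - f1 a * (x - a) - c / 2 * ((x - a) * (x - a))).
  assert (Dphi : forall s, derivable_pt_lim phi s (f1 s - f1 a - c * (s - a))).
  { intros s.
    eapply dpl_ext; [| |
      apply (derivable_pt_lim_minus
               (f - fct_cte (f a) - mult_real_fct (f1 a) (id - fct_cte a))%F
               (mult_real_fct (c/2) ((id - fct_cte a) * (id - fct_cte a))%F))].
    - intros y. unfold phi. reflexivity.
    - shelve.
    - apply derivable_pt_lim_minus. apply derivable_pt_lim_minus. apply Df. apply derivable_pt_lim_const.
      apply derivable_pt_lim_scal. apply derivable_pt_lim_minus. apply derivable_pt_lim_id. apply derivable_pt_lim_const.
    - apply derivable_pt_lim_scal. apply derivable_pt_lim_mult;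
      (apply derivable_pt_lim_minus; [apply derivable_pt_lim_id| apply derivable_pt_lim_const]).
    Unshelve. all: unfold id, fct_cte, minus_fct, mult_fct, mult_real_fct; simpl. idtac. field. }
  assert (phia : phi a = 0) by (unfold phi; ring).
  assert (phi b >= 0).
  { destruct (Rle_dec a b) as [Hab|Hab].
    - assert (phi a <= phi b).
      { apply (mono_int phi (fun s => f1 s - f1 a - c * (s - a)) a b Hab). intros; apply Dphi.
        intros s Hs. pose proof (Mpsi a s ltac:(lra)). lra. }
      lra.
    - assert ((fun x => - phi x) b <= (fun x => - phi x) a).
      { apply (mono_int (fun x => - phi x) (fun s => - (f1 s - f1 a - c * (s - a))) b a ltac:(lra)).
        intros s _. eapply dpl_ext; [| | apply derivable_pt_lim_opp; apply Dphi]; reflexivity.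
        intros s Hs. pose proof (Mpsi s a ltac:(lra)). lra. }
      simpl in H. lra. }
  unfold phi in H. lra.
Qed.

Lemma taylor_upper (f f1 f2 : R -> R) c :
  (forall s, derivable_pt_lim f s (f1 s)) ->
  (forall s, derivable_pt_lim f1 s (f2 s)) ->
  (forall s, f2 s <= c) ->
  forall a b, f b - f a - f1 a * (b - a) <= c / 2 * (b - a) ^ 2.
Proof.
  intros Df Df1 Hc a b.
  pose proof (taylor_lower (fun x => - f x) (fun x => - f1 x) (fun x => - f2 x) (- c)) as T.
  assert (forall a b, - c / 2 * (b - a) ^ 2 <= - f b - - f a - - f1 a * (b - a)).
  { apply T.
    - intros s. eapply dpl_ext; [| | apply derivable_pt_lim_opp; apply Df]; reflexivity.
    - intros s. eapply dpl_ext; [| | apply derivable_pt_lim_opp; apply Df1]; reflexivity.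
    - intros s. specialize (Hc s). lra. }
  specialize (H a b). lra.
Qed.

Lemma Alam n A Lam g : (forall i j, (i < n)%nat -> (j < n)%nat -> A i j = A j i) ->
  (forall v, 0 <= Qf n A v) -> (forall v, Qf n A v <= Lam * rsum n (fun i => v i ^ 2)) -> 0 < Lam ->
  rsum n (fun i => (rsum n (fun j => A i j * g j)) ^ 2) <= Lam * rsum n (fun i => g i * rsum n (fun j => A i j * g j)).
Proof.
  intros S Hpsd Hup Lp.
  set (h := fun i => rsum n (fun j => A i j * g j)).
  change (rsum n (fun i => h i ^ 2) <= Lam * rsum n (fun i => g i * h i)).
  set (v := fun i => Lam * g i - h i).
  set (Ah := fun i => rsum n (fun j => A i j * h j)).
  assert (Av : forall i, rsum n (fun j => A i j * v j) = Lam * h i - Ah i).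
  { intros i. unfold v, Ah, h. rewrite <- rsum_scal, <- rsum_minus. apply rsum_ext; intros; ring. }
  assert (Qv : Qf n A v = Lam ^ 2 * rsum n (fun i => g i * h i) - Lam * rsum n (fun i => g i * Ah i)
                - Lam * rsum n (fun i => h i ^ 2) + Qf n A h).
  { unfold Qf. fold Ah. rewrite <- !rsum_scal, <- !rsum_minus, <- rsum_plus. apply rsum_ext; intros i Hi.
    rewrite Av. unfold v, Ah. ring. }
  assert (X : rsum n (fun i => g i * Ah i) = rsum n (fun i => h i ^ 2)).
  { unfold Ah. rewrite (bil_sym n A g h S). apply rsum_ext; intros. unfold h. ring. }
  pose proof (Hpsd v). pose proof (Hup h). fold Ah in H0.
  assert (Qh : Qf n A h = rsum n (fun i => h i * Ah i)) by reflexivity.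
  rewrite Qv, X in H. nra.
Qed.

Lemma Fobj_eq n W alpha f y : Fobj n W alpha f y = / 2 * Qf n (Cmat W) y + alpha * rsum n (fun i => f i (y i)).
Proof. reflexivity. Qed.

Lemma Csym n W : (forall i j, (i < n)%nat -> (j < n)%nat -> W i j = W j i) ->
  forall i j, (i < n)%nat -> (j < n)%nat -> Cmat W i j = Cmat W j i.
Proof. intros S i j Hi Hj. unfold Cmat. rewrite kron_sym, S; auto. Qed.

Lemma F_expand n W alpha f f1 x d : (forall i j, (i < n)%nat -> (j < n)%nat -> W i j = W j i) ->
  Fobj n W alpha f (fun i => x i + d i) - Fobj n W alpha f x - rsum n (fun i => grad n W alpha f1 x i * d i)
  = / 2 * Qf n (Cmat W) d + alpha * rsum n (fun i => f i (x i + d i) - f i (x i) - f1 i (x i) * d i).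
Proof.
  intros S. rewrite !Fobj_eq. rewrite (quad_expand n (Cmat W) x d (Csym n W S)).
  assert (G : rsum n (fun i => grad n W alpha f1 x i * d i) =
     rsum n (fun i => d i * rsum n (fun j => Cmat W i j * x j)) + alpha * rsum n (fun i => f1 i (x i) * d i)).
  { rewrite <- rsum_scal, <- rsum_plus. apply rsum_ext; intros. unfold grad, Cmat. ring. }
  rewrite G. rewrite !rsum_minus. lra.
Qed.

Lemma step_bound n W alpha f f1 f2 M x k tau : (k < n)%nat ->
  (forall i j, (i < n)%nat -> (j < n)%nat -> W i j = W j i) ->
  (forall i s, (i < n)%nat -> derivable_pt_lim (f i) s (f1 i s)) ->
  (forall i s, (i < n)%nat -> derivable_pt_lim (f1 i) s (f2 i s)) ->
  (forall i s, (i < n)%nat -> f2 i s <= M) -> 0 <= alpha ->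
  Fobj n W alpha f (fun i => x i + tau * kron i k) <=
  Fobj n W alpha f x + tau * grad n W alpha f1 x k + tau ^ 2 * (1 - W k k + alpha * M) / 2.
Proof.
  intros Hk S Df Df1 HM Ha.
  pose proof (F_expand n W alpha f f1 x (fun i => tau * kron i k) S) as E. simpl in E.
  assert (G : rsum n (fun i => grad n W alpha f1 x i * (tau * kron i k)) = tau * grad n W alpha f1 x k).
  { rewrite <- (rsum_kron n k (fun i => tau * grad n W alpha f1 x i) Hk). apply rsum_ext; intros; ring. }
  assert (Q : Qf n (Cmat W) (fun i => tau * kron i k) = tau ^ 2 * (1 - W k k)).
  { unfold Qf.
    transitivity (rsum n (fun i => kron i k * (tau * (tau * Cmat W i k)))).
    - apply rsum_ext; intros i Hi.
      rewrite <- (rsum_kron n k (fun j => tau * Cmat W i j) Hk). 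
      replace (rsum n (fun j => Cmat W i j * (tau * kron j k))) with (rsum n (fun j => kron j k * (tau * Cmat W i j))).
      ring. apply rsum_ext; intros; ring.
    - rewrite (rsum_kron n k (fun i => tau * (tau * Cmat W i k)) Hk). unfold Cmat. rewrite kron_eq. ring. }
  assert (Fs : rsum n (fun i => f i (x i + tau * kron i k) - f i (x i) - f1 i (x i) * (tau * kron i k))
               <= M / 2 * tau ^ 2).
  { rewrite <- (rsum_kron n k (fun _ => M / 2 * tau ^ 2) Hk).
    apply rsum_le; intros i Hi. destruct (Nat.eq_dec i k) as [->|Ne].
    - rewrite kron_eq.
      pose proof (taylor_upper (f k) (f1 k) (f2 k) M (fun s => Df k s Hk) (fun s => Df1 k s Hk) (fun s => HM k s Hk)
                   (x k) (x k + tau * 1)).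
      replace (x k + tau * 1 - x k) with (tau * 1) in H by ring. nra.
    - rewrite kron_neq by auto. replace (x i + tau * 0) with (x i) by ring. lra. }
  rewrite G, Q in E.
  assert (alpha * rsum n (fun i => f i (x i + tau * kron i k) - f i (x i) - f1 i (x i) * (tau * kron i k))
          <= alpha * (M / 2 * tau ^ 2)) by (apply Rmult_le_compat_l; auto).
  lra.
Qed.

Lemma PL n W alpha f f1 f2 m x xs :
  (forall i j, (i < n)%nat -> (j < n)%nat -> W i j = W j i) ->
  (forall i j, (i < n)%nat -> (j < n)%nat -> 0 <= W i j < 1) ->
  (forall i, (i < n)%nat -> rsum n (fun j => W i j) = 1) ->
  (forall i s, (i < n)%nat -> derivable_pt_lim (f i) s (f1 i s)) ->
  (forall i s, (i < n)%nat -> derivable_pt_lim (f1 i) s (f2 i s)) ->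
  (forall i s, (i < n)%nat -> m <= f2 i s) -> 0 < alpha -> 0 < m ->
  Fobj n W alpha f x - Fobj n W alpha f xs <= / (2 * alpha * m) * rsum n (fun i => grad n W alpha f1 x i ^ 2).
Proof.
  intros S P Rw Df Df1 Hm Ha Hm0.
  pose proof (F_expand n W alpha f f1 x (fun i => xs i - x i) S) as E. simpl in E.
  replace (fun i => x i + (xs i - x i)) with xs in E
    by (apply functional_extensionality; intros; ring).
  pose proof (C_psd n W (fun i => xs i - x i) S P Rw).
  assert (Fs : rsum n (fun i => m / 2 * (xs i - x i) ^ 2) <=
     rsum n (fun i => f i (x i + (xs i - x i)) - f i (x i) - f1 i (x i) * (xs i - x i))).
  { apply rsum_le; intros i Hi.
    pose proof (taylor_lower (f i) (f1 i) (f2 i) m (fun s => Df i s Hi) (fun s => Df1 i s Hi) (fun s => Hm i s Hi)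
                   (x i) (x i + (xs i - x i))).
    replace (x i + (xs i - x i) - x i) with (xs i - x i) in H0 by ring. lra. }
  assert (alpha * rsum n (fun i => m / 2 * (xs i - x i) ^ 2) <=
     alpha * rsum n (fun i => f i (x i + (xs i - x i)) - f i (x i) - f1 i (x i) * (xs i - x i)))
    by (apply Rmult_le_compat_l; lra).
  assert (T : rsum n (fun i => - grad n W alpha f1 x i * (xs i - x i)) - alpha * rsum n (fun i => m / 2 * (xs i - x i) ^ 2)
          <= / (2 * alpha * m) * rsum n (fun i => grad n W alpha f1 x i ^ 2)).
  { rewrite <- !rsum_scal, <- rsum_minus. apply rsum_le; intros i Hi.
    set (gi := grad n W alpha f1 x i). set (di := xs i - x i).
    assert (0 <= (gi + alpha * m * di) ^ 2 * / (2 * alpha * m)).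
    { apply Rmult_le_pos. apply pow2_ge_0. left; apply Rinv_0_lt_compat; nra. }
    replace (/ (2 * alpha * m) * gi ^ 2) with ((gi + alpha * m * di) ^ 2 * / (2 * alpha * m) - gi * di - alpha * (m / 2 * di ^ 2)).
    lra. field. lra. }
  assert (rsum n (fun i => - grad n W alpha f1 x i * (xs i - x i)) = - rsum n (fun i => grad n W alpha f1 x i * (xs i - x i))).
  { replace (- rsum n (fun i => grad n W alpha f1 x i * (xs i - x i))) with (-1 * rsum n (fun i => grad n W alpha f1 x i * (xs i - x i))) by ring.
    rewrite <- (rsum_scal n (-1)). apply rsum_ext; intros; ring. }
  assert (0 <= / 2 * Qf n (Cmat W) (fun i => xs i - x i)) by lra.
  replace (fun i => x i + (xs i - x i)) with xs in H0 by (apply functional_extensionality; intros; ring).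
  lra.
Qed.

Lemma inv_sqrt_sq D : 0 < D -> / sqrt D * / sqrt D = / D.
Proof. intros H. rewrite <- Rinv_mult, sqrt_sqrt; auto. lra. Qed.

Lemma Hhat_row n W alpha f2 x v :
  (forall j, (j < n)%nat -> 0 < Ddiag W alpha f2 x j) ->
  forall i, (i < n)%nat -> Hhat_inv_apply n W alpha f2 x v i =
    v i / Ddiag W alpha f2 x i + / Ddiag W alpha f2 x i * rsum n (fun j => Bmat W i j * (v j / Ddiag W alpha f2 x j)).
Proof.
  intros Dp i Hi. unfold Hhat_inv_apply. cbv zeta.
  rewrite (rsum_ext n _ (fun j => Bmat W i j * (v j / Ddiag W alpha f2 x j))).
  - pose proof (inv_sqrt_sq _ (Dp i Hi)). unfold Rdiv. 
    transitivity ((/ sqrt (Ddiag W alpha f2 x i) * / sqrt (Ddiag W alpha f2 x i)) * (v i + rsum n (fun j => Bmat W i j * (v j * / Ddiag W alpha f2 x j)))).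
    ring. rewrite H. ring.
  - intros j Hj. unfold Rdiv. rewrite <- (inv_sqrt_sq _ (Dp j Hj)). ring.
Qed.

Definition Amat W alpha f2 x : nat -> nat -> R :=
  fun i j => kron i j / Ddiag W alpha f2 x i + Bmat W i j / (Ddiag W alpha f2 x i * Ddiag W alpha f2 x j).

Lemma A_row n W alpha f2 x v :
  (forall j, (j < n)%nat -> 0 < Ddiag W alpha f2 x j) ->
  forall i, (i < n)%nat -> rsum n (fun j => Amat W alpha f2 x i j * v j) =
    v i / Ddiag W alpha f2 x i + / Ddiag W alpha f2 x i * rsum n (fun j => Bmat W i j * (v j / Ddiag W alpha f2 x j)).
Proof.
  intros Dp i Hi. pose proof (Dp i Hi).
  rewrite <- (rsum_kron' n i (fun j => v j / Ddiag W alpha f2 x i) Hi).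
  rewrite <- rsum_scal, <- rsum_plus. apply rsum_ext; intros j Hj. pose proof (Dp j Hj).
  unfold Amat. field. lra.
Qed.

Lemma kron_case i j : (i = j /\ kron i j = 1) \/ (i <> j /\ kron i j = 0).
Proof. destruct (Nat.eq_dec i j) as [->|E]; [left; split; auto; apply kron_eq| right; split; auto; apply kron_neq; auto]. Qed.

Lemma A_sym n W alpha f2 x : (forall i j, (i < n)%nat -> (j < n)%nat -> W i j = W j i) ->
  forall i j, (i < n)%nat -> (j < n)%nat -> Amat W alpha f2 x i j = Amat W alpha f2 x j i.
Proof.
  intros S i j Hi Hj. unfold Amat, Bmat. rewrite (kron_sym j i), (S j i) by auto.
  destruct (kron_case i j) as [[-> ->]|[E ->]]; [reflexivity|].
  replace (Ddiag W alpha f2 x j * Ddiag W alpha f2 x i) with (Ddiag W alpha f2 x i * Ddiag W alpha f2 x j) by ring.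
  unfold Rdiv. ring.
Qed.

Lemma A_quad n W alpha f2 x v :
  (forall j, (j < n)%nat -> 0 < Ddiag W alpha f2 x j) ->
  Qf n (Amat W alpha f2 x) v = rsum n (fun i => v i ^ 2 / Ddiag W alpha f2 x i) + Qf n (Bmat W) (fun i => v i / Ddiag W alpha f2 x i).
Proof.
  intros Dp. unfold Qf. rewrite <- rsum_plus. apply rsum_ext; intros i Hi.
  rewrite (A_row n W alpha f2 x v Dp i Hi). pose proof (Dp i Hi). field. lra.
Qed.


Lemma A_lower n W alpha f2 x lam v :
  (forall i j, (i < n)%nat -> (j < n)%nat -> W i j = W j i) ->
  (forall i j, (i < n)%nat -> (j < n)%nat -> 0 <= W i j < 1) ->
  (forall i, (i < n)%nat -> rsum n (fun j => W i j) = 1) ->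
  (forall j, (j < n)%nat -> 0 < Ddiag W alpha f2 x j) ->
  (forall j, (j < n)%nat -> lam * Ddiag W alpha f2 x j <= 1) ->
  lam * rsum n (fun i => v i ^ 2) <= Qf n (Amat W alpha f2 x) v.
Proof.
  intros S P Rw Dp Dl. rewrite A_quad by auto.
  pose proof (B_bounds n W (fun i => v i / Ddiag W alpha f2 x i) S P Rw).
  assert (lam * rsum n (fun i => v i ^ 2) <= rsum n (fun i => v i ^ 2 / Ddiag W alpha f2 x i)).
  { rewrite <- rsum_scal. apply rsum_le; intros i Hi. pose proof (Dp i Hi). pose proof (Dl i Hi).
    set (D := Ddiag W alpha f2 x i) in *.
    replace (v i ^ 2 / D) with ((v i ^ 2 / D) * 1) by ring.
    replace (lam * v i ^ 2) with ((v i ^ 2 / D) * (lam * D)) by (field; lra).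
    apply Rmult_le_compat_l; auto. unfold Rdiv. apply Rmult_le_pos. apply pow2_ge_0. left; apply Rinv_0_lt_compat; auto. }
  lra.
Qed.

Lemma A_upper n W alpha f2 x Lam v :
  (forall i j, (i < n)%nat -> (j < n)%nat -> W i j = W j i) ->
  (forall i j, (i < n)%nat -> (j < n)%nat -> 0 <= W i j < 1) ->
  (forall i, (i < n)%nat -> rsum n (fun j => W i j) = 1) ->
  (forall j, (j < n)%nat -> 0 < Ddiag W alpha f2 x j) ->
  (forall j, (j < n)%nat -> / Ddiag W alpha f2 x j + 2 * (1 - W j j) * (/ Ddiag W alpha f2 x j) ^ 2 <= Lam) ->
  Qf n (Amat W alpha f2 x) v <= Lam * rsum n (fun i => v i ^ 2).
Proof.
  intros S P Rw Dp Du. rewrite A_quad by auto.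
  pose proof (B_bounds n W (fun i => v i / Ddiag W alpha f2 x i) S P Rw).
  assert (rsum n (fun i => v i ^ 2 / Ddiag W alpha f2 x i) + rsum n (fun i => 2 * (1 - W i i) * (v i / Ddiag W alpha f2 x i) ^ 2)
     <= Lam * rsum n (fun i => v i ^ 2)).
  { rewrite <- rsum_scal, <- rsum_plus. apply rsum_le; intros i Hi. pose proof (Dp i Hi). pose proof (Du i Hi).
    set (D := Ddiag W alpha f2 x i) in *.
    replace (v i ^ 2 / D + 2 * (1 - W i i) * (v i / D) ^ 2) with (v i ^ 2 * (/ D + 2 * (1 - W i i) * (/ D) ^ 2)) by (field; lra).
    rewrite (Rmult_comm Lam). apply Rmult_le_compat_l; auto. apply pow2_ge_0. }
  lra.
Qed.

Lemma num_Lam a c a0 a1 cm : 0 < a1 -> a1 <= a -> a <= a0 -> 0 < cm -> cm <= c ->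
  / (c + a) + a * (/ (c + a)) ^ 2 <= (1 + a0 / (a0 + cm)) / (a1 + cm).
Proof.
  intros. 
  assert (I1 : / (c + a) <= / (a1 + cm)) by (apply Rinv_le_contravar; lra).
  assert (I2 : a / (c + a) <= a0 / (a0 + cm)).
  { assert (E : a / (c + a) - a0 / (a0 + cm) = (a * cm - a0 * c) * / ((c + a) * (a0 + cm))) by (field; lra).
    assert (0 < / ((c + a) * (a0 + cm))) by (apply Rinv_0_lt_compat; nra).
    assert (a * cm - a0 * c <= 0) by nra. nra. }
  replace (/ (c + a) + a * (/ (c + a)) ^ 2) with (/ (c + a) * (1 + a / (c + a))) by (field; lra).
  unfold Rdiv at 2. rewrite (Rmult_comm (1 + a0 / (a0 + cm))).
  apply Rmult_le_compat; try lra. left; apply Rinv_0_lt_compat; lra.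
  assert (0 <= a / (c + a)) by (unfold Rdiv; apply Rmult_le_pos; [lra| left; apply Rinv_0_lt_compat; lra]). lra.
Qed.

Definition Ssum (l : list R) := fold_right Rplus 0 l.

Lemma Ssum_app l1 l2 : Ssum (l1 ++ l2) = Ssum l1 + Ssum l2.
Proof. induction l1; simpl; [lra|]. unfold Ssum in *; simpl. rewrite IHl1. lra. Qed.

Lemma Ssum_flat {A B} (g : B -> R) (h : A -> list B) l :
  Ssum (map g (flat_map h l)) = Ssum (map (fun k => Ssum (map g (h k))) l).
Proof. induction l; simpl; auto. rewrite map_app, Ssum_app, IHl. reflexivity. Qed.

Lemma Ssum_seq n c : Ssum (map c (seq 0 n)) = rsum n c.
Proof. induction n; [reflexivity|]. rewrite seq_S, map_app, Ssum_app, IHn. simpl rsum. unfold Ssum; simpl. lra. Qed.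

Lemma expected_S n W alpha f f1 f2 eps x0 t : (0 < n)%nat ->
  expected_F n W alpha f f1 f2 eps x0 (S t) =
  / INR n * rsum n (fun k => expected_F n W alpha f f1 f2 eps (ann_step n W alpha f1 f2 eps x0 k) t).
Proof.
  intros Hn. assert (0 < INR n) by (apply lt_0_INR; auto).
  assert (0 < INR n ^ t) by (apply pow_lt; auto).
  unfold expected_F. fold (Ssum (map (fun s => Fobj n W alpha f (ann_run n W alpha f1 f2 eps x0 s)) (all_seqs n (S t)))).
  simpl all_seqs. rewrite Ssum_flat, Ssum_seq.
  rewrite (rsum_ext n _ (fun k => INR n ^ t * (/ INR n ^ t * fold_right Rplus 0
       (map (fun s => Fobj n W alpha f (ann_run n W alpha f1 f2 eps (ann_step n W alpha f1 f2 eps x0 k) s)) (all_seqs n t))))).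
  - rewrite rsum_scal. simpl pow. field. lra.
  - intros k Hk. rewrite map_map. unfold Ssum. field_simplify. reflexivity. lra.
Qed.

Lemma final_alg nr eps lam Lam am e P H G : 0 < nr -> 0 < eps -> 0 < lam -> lam <= Lam -> 0 < am -> 0 <= e ->
  0 < 2 * lam - eps * Lam -> H <= Lam * P -> lam * G <= P -> 2 * am * e <= G ->
  - (eps / nr) * P + eps ^ 2 * H / (2 * nr * lam) <= - (am * eps * (2 * lam ^ 2 - eps * Lam ^ 2) / (nr * lam)) * e.
Proof.
  intros. 
  assert (S1 : - 2 * lam * eps * P + eps ^ 2 * H <= - 2 * am * eps * (2 * lam ^ 2 - eps * Lam ^ 2) * e).
  { assert (eps ^ 2 * H <= eps ^ 2 * (Lam * P)) by (apply Rmult_le_compat_l; nra).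
    assert (0 <= G) by nra.
    assert (0 <= P) by nra.
    assert (K : 0 < eps * (2 * lam - eps * Lam)) by (apply Rmult_lt_0_compat; lra).
    assert (A1 : eps * (2 * lam - eps * Lam) * (lam * G) <= eps * (2 * lam - eps * Lam) * P) by (apply Rmult_le_compat_l; lra).
    assert (A2 : eps * (2 * lam - eps * Lam) * lam * (2 * am * e) <= eps * (2 * lam - eps * Lam) * lam * G)
      by (apply Rmult_le_compat_l; nra).
    assert (A3 : 2 * am * eps * e * (eps * lam * Lam) <= 2 * am * eps * e * (eps * Lam ^ 2)).
    { apply Rmult_le_compat_l. repeat apply Rmult_le_pos; lra.
      replace (eps * Lam ^ 2) with (eps * Lam * Lam) by ring. replace (eps * lam * Lam) with (eps * Lam * lam) by ring.
      apply Rmult_le_compat_l; [apply Rmult_le_pos|]; lra. }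
    nra. }
  assert (0 < 2 * nr * lam) by nra.
  apply (Rmult_le_reg_l (2 * nr * lam)); auto.
  replace (2 * nr * lam * (- (eps / nr) * P + eps ^ 2 * H / (2 * nr * lam))) with (- 2 * lam * eps * P + eps ^ 2 * H) by (field; lra).
  replace (2 * nr * lam * (- (am * eps * (2 * lam ^ 2 - eps * Lam ^ 2) / (nr * lam)) * e))
    with (- 2 * am * eps * (2 * lam ^ 2 - eps * Lam ^ 2) * e) by (field; lra).
  exact S1.
Qed.

Theorem theorem4p5 :
  forall (n : nat) (alpha delta Delta m M L eps : R)
         (W : nat -> nat -> R) (f f1 f2 : nat -> R -> R)
         (xstar x0 : nat -> R),
  (2 <= n)%nat ->
  0 < alpha ->
  0 < delta -> delta <= Delta -> Delta < 1 ->
  (forall i j, (i < n)%nat -> (j < n)%nat -> W i j = W j i) ->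
  (forall i j, (i < n)%nat -> (j < n)%nat -> 0 <= W i j < 1) ->
  (forall i, (i < n)%nat -> rsum n (fun j => W i j) = 1) ->
  (forall v : nat -> R,
     (forall i, (i < n)%nat -> rsum n (fun j => (kron i j - W i j) * v j) = 0) ->
     forall i j, (i < n)%nat -> (j < n)%nat -> v i = v j) ->
  (forall i, (i < n)%nat -> delta <= W i i <= Delta) ->
  (forall i s, (i < n)%nat -> derivable_pt_lim (f i) s (f1 i s)) ->
  (forall i s, (i < n)%nat -> derivable_pt_lim (f1 i) s (f2 i s)) ->
  (forall i, (i < n)%nat -> continuity (f2 i)) ->
  0 < m ->
  (forall i s, (i < n)%nat -> m <= f2 i s <= M) ->
  (forall i a b, (i < n)%nat -> Rabs (f2 i a - f2 i b) <= L * Rabs (a - b)) ->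
  (forall y : nat -> R, Fobj n W alpha f xstar <= Fobj n W alpha f y) ->
  0 < eps -> eps < 1 ->
  eps < 2 * (lambda_c delta alpha M / Lambda_c delta Delta alpha m) ^ 2 ->
  let Fstar := Fobj n W alpha f xstar in
  let lam := lambda_c delta alpha M in
  let Lam := Lambda_c delta Delta alpha m in
  let beta := alpha * m * eps * (2 * lam ^ 2 - eps * Lam ^ 2) / (INR n * lam) in
  (forall t : nat,
     expected_F n W alpha f f1 f2 eps x0 t - Fstar
       <= (1 - beta) ^ t * (Fobj n W alpha f x0 - Fstar))
  /\ 0 < beta < 1.
Proof.
  intros n alpha delta Delta m M L eps W f f1 f2 xstar x0 Hn Ha Hd HdD HD1 S P Rw Hker Hdiag Df Df1 Cf2 Hm Hf2 HL Hmin
    He0 He1 Heps Fstar lam Lam beta.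
  assert (Hn0 : (0 < n)%nat) by lia.
  assert (nr : 2 <= INR n) by (replace 2 with (INR 2) by (simpl; lra); apply le_INR; auto).
  assert (mM : m <= M) by (destruct (Hf2 0%nat 0 Hn0); lra).
  assert (lam_eq : lam = 1 / (2 * (1 - delta) + alpha * M)) by reflexivity.
  assert (dpos : 0 < 2 * (1 - delta) + alpha * M) by nra.
  assert (lam_pos : 0 < lam) by (rewrite lam_eq; apply Rdiv_lt_0_compat; lra).
  set (rho := rho_c delta alpha m).
  assert (rho_nn : 0 <= rho).
  { unfold rho, rho_c. apply Rmult_le_pos. lra. left; apply Rinv_0_lt_compat; nra. }
  assert (Lam_eq : Lam = (1 + rho) / (2 * (1 - Delta) + alpha * m)) by reflexivity.
  assert (d1pos : 0 < 2 * (1 - Delta) + alpha * m) by nra.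
  assert (lamLam : lam <= Lam).
  { rewrite lam_eq, Lam_eq. unfold Rdiv. apply Rmult_le_compat. lra. left; apply Rinv_0_lt_compat; lra. lra.
    apply Rinv_le_contravar. lra. nra. }
  assert (Lam_pos : 0 < Lam) by lra.
  assert (Heps2 : eps * Lam ^ 2 < 2 * lam ^ 2).
  { fold lam Lam in Heps. replace (2 * lam ^ 2) with (2 * (lam / Lam) ^ 2 * Lam ^ 2) by (field; lra).
    apply Rmult_lt_compat_r. nra. auto. }
  assert (H2 : 0 < 2 * lam - eps * Lam) by nra.
  assert (beta_pos : 0 < beta).
  { unfold beta. apply Rdiv_lt_0_compat. apply Rmult_lt_0_compat. repeat apply Rmult_lt_0_compat; lra. lra. apply Rmult_lt_0_compat; lra. }
  assert (beta_lt : beta < 1).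
  { unfold beta. apply (Rmult_lt_reg_r (INR n * lam)). nra.
    unfold Rdiv. rewrite Rmult_assoc, Rinv_l, Rmult_1_r by nra.
    assert (alpha * m * lam < 1).
    { rewrite lam_eq. unfold Rdiv. rewrite Rmult_1_l. apply (Rmult_lt_reg_r (2 * (1 - delta) + alpha * M)); auto.
      rewrite Rmult_assoc, Rinv_l, Rmult_1_l, Rmult_1_r by lra. nra. }
    assert (0 <= eps * Lam ^ 2) by nra.
    assert (alpha * m * eps * (2 * lam ^ 2 - eps * Lam ^ 2) <= alpha * m * 2 * lam ^ 2).
    { assert (0 < alpha * m) by nra. set (X := 2 * lam ^ 2 - eps * Lam ^ 2) in *.
      assert (0 < X) by (unfold X; lra).
      assert (alpha * m * eps * X <= alpha * m * 1 * X).
      { replace (alpha * m * eps * X) with ((alpha * m) * (eps * X)) by ring.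
        replace (alpha * m * 1 * X) with ((alpha * m) * X) by ring.
        apply Rmult_le_compat_l. lra. nra. }
      assert (alpha * m * 1 * X <= alpha * m * 2 * lam ^ 2).
      { replace (alpha * m * 1 * X) with ((alpha * m) * X) by ring.
        replace (alpha * m * 2 * lam ^ 2) with ((alpha * m) * (2 * lam ^ 2)) by ring.
        apply Rmult_le_compat_l. lra. unfold X. lra. }
      lra. }
    assert (alpha * m * 2 * lam ^ 2 = 2 * lam * (alpha * m * lam)) by ring.
    assert (2 * lam * (alpha * m * lam) < 2 * lam * 1) by (apply Rmult_lt_compat_l; lra).
    assert (2 * lam <= INR n * lam) by (apply Rmult_le_compat_r; lra).
    lra. }
  assert (Dp : forall x j, (j < n)%nat -> 0 < Ddiag W alpha f2 x j).
  { intros x j Hj. unfold Ddiag. destruct (Hf2 j (x j) Hj). destruct (Hdiag j Hj). nra. }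
  assert (Dl : forall x j, (j < n)%nat -> lam * Ddiag W alpha f2 x j <= 1).
  { intros x j Hj. rewrite lam_eq. unfold Ddiag. destruct (Hf2 j (x j) Hj). destruct (Hdiag j Hj).
    unfold Rdiv. rewrite Rmult_1_l. apply (Rmult_le_reg_l (2 * (1 - delta) + alpha * M)); auto.
    rewrite <- Rmult_assoc, Rinv_r, Rmult_1_l, Rmult_1_r by lra. nra. }
  assert (Du : forall x j, (j < n)%nat ->
     / Ddiag W alpha f2 x j + 2 * (1 - W j j) * (/ Ddiag W alpha f2 x j) ^ 2 <= Lam).
  { intros x j Hj. destruct (Hf2 j (x j) Hj). destruct (Hdiag j Hj).
    unfold Ddiag. rewrite Lam_eq. unfold rho, rho_c.
    apply num_Lam; nra. }
  assert (Fmin : forall y, 0 <= Fobj n W alpha f y - Fstar) by (intros y; pose proof (Hmin y); unfold Fstar; lra).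
  assert (One : forall x, / INR n * rsum n (fun k => Fobj n W alpha f (ann_step n W alpha f1 f2 eps x k)) - Fstar
                 <= (1 - beta) * (Fobj n W alpha f x - Fstar)).
  { intros x.
    set (g := grad n W alpha f1 x).
    set (h := Hhat_inv_apply n W alpha f2 x g).
    assert (hA : forall i, (i < n)%nat -> h i = rsum n (fun j => Amat W alpha f2 x i j * g j)).
    { intros i Hi. unfold h. rewrite Hhat_row, A_row; auto. }
    set (PP := rsum n (fun i => g i * h i)).
    set (HH := rsum n (fun i => h i ^ 2)).
    set (GG := rsum n (fun i => g i ^ 2)).
    assert (PPq : PP = Qf n (Amat W alpha f2 x) g).
    { unfold PP, Qf. apply rsum_ext; intros i Hi. rewrite hA; auto. }
    assert (P1 : lam * GG <= PP).
    { rewrite PPq. apply A_lower; auto. }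
    assert (P2 : HH <= Lam * PP).
    { assert (E : HH = rsum n (fun i => (rsum n (fun j => Amat W alpha f2 x i j * g j)) ^ 2)).
      { unfold HH. apply rsum_ext; intros i Hi. rewrite hA; auto. }
      assert (E2 : PP = rsum n (fun i => g i * rsum n (fun j => Amat W alpha f2 x i j * g j))).
      { unfold PP. apply rsum_ext; intros i Hi. rewrite hA; auto. }
      rewrite E, E2. apply Alam; auto.
      - apply A_sym; auto.
      - intros v. apply Rle_trans with (lam * rsum n (fun i => v i ^ 2)).
        + apply Rmult_le_pos. lra.
          replace 0 with (rsum n (fun _ => 0)) by (rewrite rsum_const; ring).
          apply rsum_le; intros; apply pow2_ge_0.
        + apply A_lower; auto.
      - intros v. apply A_upper; auto. }
    assert (P3 : Fobj n W alpha f x - Fstar <= / (2 * alpha * m) * GG).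
    { unfold Fstar, GG, g. apply (PL n W alpha f f1 f2 m); auto. intros; apply Hf2; auto. }
    assert (Step : forall k, (k < n)%nat -> Fobj n W alpha f (ann_step n W alpha f1 f2 eps x k) <=
         Fobj n W alpha f x - eps * (g k * h k) + eps ^ 2 / (2 * lam) * h k ^ 2).
    { intros k Hk.
      replace (ann_step n W alpha f1 f2 eps x k) with (fun i => x i + (- eps * h k) * kron i k).
      2:{ apply functional_extensionality; intros j. unfold ann_step. fold g. fold h.
          destruct (Nat.eqb_spec j k) as [->|E]. rewrite kron_eq; ring. rewrite kron_neq by auto; ring. }
      eapply Rle_trans. apply (step_bound n W alpha f f1 f2 M); auto. intros; apply Hf2; auto. lra.
      fold g. destruct (Hdiag k Hk).
      assert (1 - W k k + alpha * M <= / lam) by (rewrite lam_eq; unfold Rdiv; rewrite Rmult_1_l, Rinv_inv; lra).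
      assert ((- eps * h k) ^ 2 * (1 - W k k + alpha * M) <= (eps * h k) ^ 2 * / lam).
      { replace ((- eps * h k) ^ 2) with ((eps * h k) ^ 2) by ring. apply Rmult_le_compat_l; auto. apply pow2_ge_0. }
      replace (eps ^ 2 / (2 * lam) * h k ^ 2) with ((eps * h k) ^ 2 * / lam / 2) by (field; lra).
      lra. }
    assert (Sum : rsum n (fun k => Fobj n W alpha f (ann_step n W alpha f1 f2 eps x k)) <=
        INR n * Fobj n W alpha f x - eps * PP + eps ^ 2 / (2 * lam) * HH).
    { eapply Rle_trans. apply rsum_le. exact Step.
      rewrite rsum_plus, rsum_minus, rsum_const, !rsum_scal. unfold PP, HH. lra. }
    assert (Alg := final_alg (INR n) eps lam Lam (alpha * m) (Fobj n W alpha f x - Fstar) PP HH GG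
                     ltac:(lra) He0 lam_pos lamLam ltac:(nra) (Fmin x) H2 P2 P1).
    assert (2 * (alpha * m) * (Fobj n W alpha f x - Fstar) <= GG).
    { assert (0 < 2 * alpha * m) by nra.
      apply (Rmult_le_compat_l (2 * alpha * m)) in P3; [|lra].
      rewrite <- Rmult_assoc, Rinv_r, Rmult_1_l in P3 by lra. lra. }
    specialize (Alg H).
    assert (/ INR n * rsum n (fun k => Fobj n W alpha f (ann_step n W alpha f1 f2 eps x k)) <=
            / INR n * (INR n * Fobj n W alpha f x - eps * PP + eps ^ 2 / (2 * lam) * HH)).
    { apply Rmult_le_compat_l. left; apply Rinv_0_lt_compat; lra. auto. }
    replace (/ INR n * (INR n * Fobj n W alpha f x - eps * PP + eps ^ 2 / (2 * lam) * HH))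
      with (Fobj n W alpha f x + (- (eps / INR n) * PP + eps ^ 2 * HH / (2 * INR n * lam))) in H0 by (field; lra).
    unfold beta. lra. }
  split; [|split; auto].
  intros t. revert x0. induction t as [|t IH]; intros x0.
  - unfold expected_F. simpl. unfold Fstar. lra.
  - rewrite expected_S by auto.
    assert (B0 : 0 <= (1 - beta) ^ t) by (apply pow_le; lra).
    assert (rsum n (fun k => expected_F n W alpha f f1 f2 eps (ann_step n W alpha f1 f2 eps x0 k) t) <=
            rsum n (fun k => Fstar + (1 - beta) ^ t * (Fobj n W alpha f (ann_step n W alpha f1 f2 eps x0 k) - Fstar))).
    { apply rsum_le; intros k Hk. pose proof (IH (ann_step n W alpha f1 f2 eps x0 k)). lra. }
    rewrite rsum_plus, rsum_const, rsum_scal, rsum_minus, rsum_const in H.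
    pose proof (One x0).
    assert (/ INR n * rsum n (fun k => expected_F n W alpha f f1 f2 eps (ann_step n W alpha f1 f2 eps x0 k) t) <=
            / INR n * (INR n * Fstar + (1 - beta) ^ t * (rsum n (fun k => Fobj n W alpha f (ann_step n W alpha f1 f2 eps x0 k)) - INR n * Fstar)))
      by (apply Rmult_le_compat_l; [left; apply Rinv_0_lt_compat; lra| auto]).
    replace (/ INR n * (INR n * Fstar + (1 - beta) ^ t * (rsum n (fun k => Fobj n W alpha f (ann_step n W alpha f1 f2 eps x0 k)) - INR n * Fstar)))
      with (Fstar + (1 - beta) ^ t * (/ INR n * rsum n (fun k => Fobj n W alpha f (ann_step n W alpha f1 f2 eps x0 k)) - Fstar)) in H1
      by (field; lra).
    assert ((1 - beta) ^ t * (/ INR n * rsum n (fun k => Fobj n W alpha f (ann_step n W alpha f1 f2 eps x0 k)) - Fstar)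
            <= (1 - beta) ^ t * ((1 - beta) * (Fobj n W alpha f x0 - Fstar))) by (apply Rmult_le_compat_l; auto).
    simpl pow. lra.
Qed.
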